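(* Let $L$ be a finite $\mathcal{L}$-lattice with $|L|\le n$. Then $L$ has the interpolation property iff every valid $a\le b$ with at most $n$ right variables has an interpolant, i.e. a formula $i$ whose variables are all intersection variables of $a,b$ such that $a\le i$ and $i\le b$ are valid.
   Context: A lattice-oriented signature $\mathcal{L}$ is a finite set of connectives. Each connective $c$ has an arity $n_c\in\mathbb{N}$ and a polarity $p_c:\{1,\dots,n_c\}\to\{-,+\}$. The signature contains binary connectives $\lor,\land,\to$ with $p_\lor(1)=p_\lor(2)=p_\land(1)=p_\land(2)=+$, $p_\to(1)=-$ and $p_\to(2)=+$; nullary connectives are truth constants. A finite $\mathcal{L}$-lattice is a finite set $L$ together with an $n_c$-ary operation $c^L$ on $L$ for each connective $c$, such that: - $(L,\lor^L,\land^L)$ is a lattice, with order $x\le y$ iff $x\land y=x$; its top element is denoted $1$; - $c^L$ is monotone in every argument $i$ with $p_c(i)=+$ and antitone in every argument $i$ with $p_c(i)=-$; - for all $a,b\in L$: $1\le a\to^L b$ iff $a\le b$. Formulas (words) are built from propositional variables using the connectives. A valuation assigns elements of $L$ to the variables and extends to all formulas via the operations $c^L$. For formulas $a,b$, ''$a\le b$ is valid'' means that the value of $a$ is $\le$ the value of $b$ under every valuation. For a valid $a\le b$, the variables occurring only in $a$ are the left variables, those occurring only in $b$ are the right variables, and those occurring in both are the intersection variables. $L$ has the interpolation property iff for all formulas $a,b$ with $a\le b$ valid there is a formula $i$ whose variables are all intersection variables of $a,b$ such that $a\le i$ and $i\le b$ are valid. If there are no intersection variables, $i$ must be a closed formula.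 *)

(* Defs.v *)
From mathcomp Require Import all_boot.
Set Implicit Arguments. Unset Strict Implicit. Unset Printing Implicit Defensive.

(* A lattice-oriented signature: a finite set of connectives with arities and
   polarities (pol c i = true means polarity + for argument i < arity c),
   containing three distinct binary connectives or, and, imp with the
   prescribed polarities. *)
Record Lsig := {
  conn : finType;
  arity : conn -> nat;
  pol : conn -> nat -> bool;
  c_or : conn; c_and : conn; c_imp : conn;
  ar_or : arity c_or = 2; ar_and : arity c_and = 2; ar_imp : arity c_imp = 2;
  pol_or : pol c_or 0 = true /\ pol c_or 1 = true;
  pol_and : pol c_and 0 = true /\ pol c_and 1 = true;
  pol_imp : pol c_imp 0 = false /\ pol c_imp 1 = true;
  dist_or_and : c_or <> c_and; dist_or_imp : c_or <> c_imp;
  dist_and_imp : c_and <> c_imp }.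

Inductive form (S : Lsig) : Type :=
| Var : nat -> form S
| Node (c : conn S) : ('I_(arity c) -> form S) -> form S.

Fixpoint vars (S : Lsig) (a : form S) : seq nat :=
  match a with
  | Var x => [:: x]
  | Node c f => flatten [seq vars (f i) | i <- enum 'I_(arity c)]
  end.

Definition interp (S : Lsig) (L : Type) := forall c : conn S, ('I_(arity c) -> L) -> L.

Definition bin (S : Lsig) (L : Type) (op : interp S L) (c : conn S) (x y : L) : L :=
  op c (fun i : 'I_(arity c) => if nat_of_ord i == 0 then x else y).

Definition ljoin S L (op : interp S L) := bin op (c_or S).
Definition lmeet S L (op : interp S L) := bin op (c_and S).
Definition limp S L (op : interp S L) := bin op (c_imp S).

Definition lle S L (op : interp S L) (x y : L) : Prop := lmeet op x y = x.

Definition is_lattice S L (op : interp S L) : Prop :=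
  let j := ljoin op in let m := lmeet op in
  [/\ (forall x y, j x y = j y x), (forall x y, m x y = m y x),
      (forall x y z, j x (j y z) = j (j x y) z),
      (forall x y z, m x (m y z) = m (m x y) z) &
      ((forall x y, j x (m x y) = x) /\ (forall x y, m x (j x y) = x))].

Definition respects_polarity S L (op : interp S L) : Prop :=
  forall (c : conn S) (i : 'I_(arity c)) (f g : 'I_(arity c) -> L),
    (forall j, j != i -> f j = g j) ->
    lle op (f i) (g i) ->
    (if pol c i then lle op (op c f) (op c g) else lle op (op c g) (op c f)).

Definition is_Llattice S (L : finType) (op : interp S L) : Prop :=
  [/\ is_lattice op, respects_polarity op &
      exists top : L, (forall x, lle op x top) /\
        (forall a b, lle op top (limp op a b) <-> lle op a b)].

Fixpoint eval S (L : Type) (op : interp S L) (v : nat -> L) (a : form S) : L :=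
  match a with
  | Var x => v x
  | Node c f => op c (fun i => eval op v (f i))
  end.

Definition valid S L (op : interp S L) (a b : form S) : Prop :=
  forall v : nat -> L, lle op (eval op v a) (eval op v b).

Definition rightvars S (a b : form S) : seq nat :=
  undup [seq x <- vars b | x \notin vars a].

Definition interpolant S L (op : interp S L) (a b i : form S) : Prop :=
  [/\ (forall x, x \in vars i -> (x \in vars a) && (x \in vars b)),
      valid op a i & valid op i b].

Definition interpolation_property S L (op : interp S L) : Prop :=
  forall a b : form S, valid op a b -> exists i, interpolant op a b i.

(* Main.v *)
Require Import Defs.
From Stdlib Require Import FunctionalExtensionality.
From Stdlib Require List.
From mathcomp Require Import all_boot.
Set Implicit Arguments. Unset Strict Implicit. Unset Printing Implicit Defensive.

Fixpoint ren (S : Lsig) (s : nat -> nat) (a : form S) : form S :=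
  match a with
  | Var x => Var S (s x)
  | Node c f => Node (fun i => ren s (f i))
  end.

Lemma eval_ren S L (op : interp S L) v s (a : form S) :
  eval op v (ren s a) = eval op (fun x => v (s x)) a.
Proof.
elim: a => [x|c f IH] //=. f_equal; apply: functional_extensionality => i; exact: IH.
Qed.

Lemma vars_ren S s (a : form S) : vars (ren s a) = map s (vars a).
Proof.
elim: a => [x|c f IH] //=. rewrite map_flatten -map_comp.
congr flatten; apply: eq_map => i /=; exact: IH.
Qed.

Lemma eval_ext S L (op : interp S L) v w (a : form S) :
  (forall x, x \in vars a -> v x = w x) -> eval op v a = eval op w a.
Proof.
elim: a => [x|c f IH] /= H; first by apply: H; rewrite inE.
f_equal; apply: functional_extensionality => i; apply: IH => x Hx; apply: H.
apply/flatten_mapP; exists i => //; exact: mem_enum.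
Qed.

Definition fmeet S (x y : form S) : form S :=
  Node (fun i : 'I_(arity (c_and S)) => if nat_of_ord i == 0 then x else y).

Arguments fmeet : simpl never.

Lemma eval_fmeet S L (op : interp S L) v (x y : form S) :
  eval op v (fmeet x y) = lmeet op (eval op v x) (eval op v y).
Proof.
rewrite /fmeet /= /lmeet /bin; f_equal; apply: functional_extensionality => i.
by case: (nat_of_ord i == 0).
Qed.

Lemma vars_fmeet S (x y : form S) z :
  z \in vars (fmeet x y) -> (z \in vars x) || (z \in vars y).
Proof.
move=> /flatten_mapP [i _]; case: (nat_of_ord i == 0) => ->; by rewrite ?orbT.
Qed.

Section Lat.
Variables (S : Lsig) (L : Type) (op : interp S L).
Hypothesis Hl : is_lattice op.

Lemma meet_idem x : lmeet op x x = x.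
Proof.
case: Hl => _ _ _ _ [Ha1 Ha2].
by rewrite -{2}(Ha1 x x) Ha2.
Qed.

Lemma meet_lel x y : lle op (lmeet op x y) x.
Proof.
case: Hl => _ Hc _ Ha _. by rewrite /lle (Hc (lmeet op x y) x) Ha meet_idem.
Qed.

Lemma meet_ler x y : lle op (lmeet op x y) y.
Proof.
case: Hl => _ Hc _ Ha _. rewrite /lle -Ha meet_idem //.
Qed.

Lemma lle_trans x y z : lle op x y -> lle op y z -> lle op x z.
Proof.
case: Hl => _ _ _ Ha _. rewrite /lle => H1 H2. by rewrite -H1 -Ha H2.
Qed.

Lemma meet_glb z x y : lle op z x -> lle op z y -> lle op z (lmeet op x y).
Proof.
case: Hl => _ _ _ Ha _. rewrite /lle => H1 H2. by rewrite Ha H1.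
Qed.

Lemma fold_le v base (l : seq (form S)) f :
  List.In f (base :: l) -> lle op (eval op v (foldr (@fmeet S) base l)) (eval op v f).
Proof.
elim: l => [|h l IH].
  by move=> [->|[]]; rewrite /lle meet_idem.
rewrite (_ : foldr _ base (h::l) = fmeet h (foldr (@fmeet S) base l)) //.
rewrite eval_fmeet => [[E|[->|Hf]]].
- apply: lle_trans (meet_ler _ _) _; apply: IH; by left.
- exact: meet_lel.
- apply: lle_trans (meet_ler _ _) _; apply: IH; by right.
Qed.

Lemma fold_glb v z base (l : seq (form S)) :
  (forall f, List.In f (base :: l) -> lle op z (eval op v f)) ->
  lle op z (eval op v (foldr (@fmeet S) base l)).
Proof.
elim: l => [|h l IH] H; first by apply: H; left.
rewrite (_ : foldr _ base (h::l) = fmeet h (foldr (@fmeet S) base l)) //.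
rewrite eval_fmeet; apply: meet_glb.
  apply: H; by right; left.
apply: IH => f [<-|Hf]; apply: H; first by left.
by right; right.
Qed.
End Lat.

Lemma vars_fold S (base : form S) l z :
  z \in vars (foldr (@fmeet S) base l) -> exists2 f, List.In f (base :: l) & z \in vars f.
Proof.
elim: l => [|h l IH]; first by move=> H; exists base; first left.
rewrite (_ : foldr _ base (h::l) = fmeet h (foldr (@fmeet S) base l)) //.
move/vars_fmeet => /orP [H|/IH [f Hf Hz]].
  by exists h; first (right; left).
exists f => //; move: Hf => [->|Hf]; [left|right;right] => //.
Qed.

Lemma memIn (T : eqType) (x : T) s : x \in s -> List.In x s.
Proof. elim: s => [|h s IH] //=; rewrite inE => /orP [/eqP->|/IH]; by [left|right]. Qed.

Lemma In_map (T U : Type) (f : T -> U) x s : List.In x s -> List.In (f x) (map f s).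
Proof. elim: s => [|h s IH] //= [->|H]; by [left|right; apply: IH]. Qed.

Lemma In_map_inv (T U : Type) (f : T -> U) y s :
  List.In y (map f s) -> exists x, f x = y /\ List.In x s.
Proof.
elim: s => [|h s IH] //= [<-|/IH [x [E H]]]; first by exists h; split => //; left.
by exists x; split => //; right.
Qed.

Lemma lt_foldr_max s x : x \in s -> x < (foldr maxn 0 s).+1.
Proof.
elim: s => [|h s IH] //=; rewrite inE => /orP [/eqP->|/IH H]; rewrite ltnS.
  exact: leq_maxl.
apply: leq_trans (leq_maxr _ _); by rewrite -ltnS.
Qed.

Theorem lemma2 (S : Lsig) (L : finType) (op : interp S L) (n : nat) :
  is_Llattice op -> #|L| <= n ->
  (interpolation_property op <->
   forall a b : form S, valid op a b -> size (rightvars a b) <= n ->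
     exists i, interpolant op a b i).
Proof.
move=> [Hlat _ [l0 _]] HL; split.
  by move=> H a b Hv _; exact: H.
move=> H a b Hab.
pose N := (foldr maxn 0 (vars a ++ vars b)).+1.
have HNa : forall x, x \in vars a -> x < N.
  by move=> x Hx; apply: lt_foldr_max; rewrite mem_cat Hx.
have HNb : forall x, x \in vars b -> x < N.
  by move=> x Hx; apply: lt_foldr_max; rewrite mem_cat Hx orbT.
pose sg (g : N.-tuple L) x :=
  if x \in vars a then x else N + enum_rank (nth l0 g x).
pose g0 := [tuple of nseq N l0].
pose B := foldr (@fmeet S) (ren (sg g0) b)
   [seq ren (sg g) b | g <- enum {: N.-tuple L}].
have HvB : forall z, z \in vars B -> exists g, z \in map (sg g) (vars b).
  move=> z /vars_fold [f] [<-|Hin]; [|have [g [<- _]] := In_map_inv Hin];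
    rewrite vars_ren => Hz; by [exists g0|exists g].
have HaB : valid op a B.
  move=> v; apply: fold_glb => // f [<-|Hin]; [|have [g [<- _]] := In_map_inv Hin];
  rewrite eval_ren; set s := sg _;
  (rewrite (@eval_ext _ _ _ v (fun x => v (s x)) a); [exact: Hab |
   by move=> x Hx; rewrite /s /sg Hx]).
have Hsz : size (rightvars a B) <= n.
  apply: leq_trans HL; rewrite -(size_iota N #|L|).
  apply: uniq_leq_size; first exact: undup_uniq.
  move=> z; rewrite mem_undup mem_filter => /andP [Hza /HvB [g /mapP [y Hy Ez]]]; subst z.
  move: Hza; rewrite /sg; case: ifP => [->//|_ _].
  by rewrite mem_iota leq_addr ltn_add2l ltn_ord.
have [i [Hi1 Hi2 Hi3]] := H a B HaB Hsz.
exists i; split => //.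
  move=> x Hx; have /andP [Hxa HxB] := Hi1 x Hx; rewrite Hxa /=.
  have [g /mapP [y Hy Hxy]] := HvB x HxB.
  move: Hxy; rewrite /sg; case: ifP => [_ -> //|_ Hxy].
  have := HNa x Hxa; by rewrite Hxy ltnNge leq_addr.
move=> v.
pose w x := if N <= x then nth l0 (enum L) (x - N) else v x.
have Hg : size (map v (iota 0 N)) == N by rewrite size_map size_iota.
pose g := Tuple Hg.
have Hiv : eval op v i = eval op w i.
  apply: eval_ext => x Hx; have /andP [Hxa _] := Hi1 x Hx.
  by rewrite /w leqNgt HNa.
have Hbv : eval op v b = eval op w (ren (sg g) b).
  rewrite eval_ren; apply: eval_ext => x Hx; rewrite /sg.
  case: ifP => _; first by rewrite /w leqNgt HNb.
  rewrite /w.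
  rewrite leq_addr addKn nth_enum_rank (nth_map 0); last by rewrite size_iota HNb.
  by rewrite nth_iota ?HNb.
rewrite Hiv Hbv; apply: lle_trans (Hi3 w) _ => //.
apply: fold_le => //; right.
apply: In_map; apply: memIn; exact: mem_enum.
Qed.
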